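(* Let $D$ be the minimal Dress ring of $\mathbb{R}(X)$. Then: (1) for all $a,b\in D$ with $aD+bD=D$, the element $a^2+b^2$ is a unit of $D$ (so $D$ has square stable range one); (2) for $a=X/(1+X^2)$ and $b=(X^2-1)/(1+X^2)$ one has $a,b\in D$ and $aD+bD=D$, but $a+bz$ is not a unit of $D$ for any $z\in D$ (so $D$ does not have $1$ in the stable range).
   Context: $D$ denotes the minimal Dress ring of the field $\mathbb{R}(X)$, i.e. the subring of $\mathbb{R}(X)$ generated by $\mathbb{Z}$ and all elements $1/(1+h^2)$ with $h\in\mathbb{R}(X)$. *)

(* Defs.v *)
From HB Require Import structures.
From mathcomp Require Import all_boot all_order all_algebra.
Set Implicit Arguments. Unset Strict Implicit. Unset Printing Implicit Defensive.
Import Order.TTheory GRing.Theory Num.Theory.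
Local Open Scope ring_scope.

Definition ratfun (R : rcfType) := {fraction {poly R}}.

Definition Xf (R : rcfType) : ratfun R := FracField.tofrac ('X : {poly R}).

(* membership in the minimal Dress ring D of R(X): the subring generated by
   Z (i.e. by 1, using subtraction) and all 1/(1+h^2), h in R(X). *)
Inductive inD (R : rcfType) : ratfun R -> Prop :=
| inD_1 : inD 1
| inD_dress (h : ratfun R) : inD (1 / (1 + h ^+ 2))
| inD_sub (x y : ratfun R) : inD x -> inD y -> inD (x - y)
| inD_mul (x y : ratfun R) : inD x -> inD y -> inD (x * y).

Definition unitD (R : rcfType) (x : ratfun R) : Prop :=
  inD x /\ exists c : ratfun R, inD c /\ x * c = 1.

Definition comaxD (R : rcfType) (a b : ratfun R) : Prop :=
  exists u v : ratfun R, inD u /\ inD v /\ a * u + b * v = 1.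

(* Main.v *)
From HB Require Import structures.
From mathcomp Require Import all_boot all_order all_algebra.
From mathcomp Require Import ring lra.
Import Order.TTheory GRing.Theory Num.Theory.
Local Open Scope ring_scope.
Require Import Defs.
Local Notation "x %:F" := (@FracField.tofrac _ x) (format "x %:F").

Lemma frac_repr (R : idomainType) (f : {fraction R}) :
  exists p q : R, q != 0 /\ f = p%:F / q%:F.
Proof.
elim/quotW: f => x.
exists (\n_x), (\d_x); split; first exact: denom_ratioP.
unlock FracField.tofrac.
transitivity (FracField.mul (\pi_({fraction R})%qT (Ratio \n_x 1))
   (FracField.inv (\pi_({fraction R})%qT (Ratio \d_x 1)))); last by [].
rewrite -FracField.pi_inv -FracField.pi_mul /FracField.invf /FracField.mulf.
rewrite !numden_Ratio ?oner_eq0 ?denom_ratioP // mulr1 mul1r.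
by rewrite Ratio_numden.
Qed.

Section Gen.
Variable K : fieldType.
Implicit Types P Q x a b u v n d p q pz qz : K.
Lemma gA1 P Q : Q != 0 -> Q^+2 + P^+2 != 0 -> 1 / (1 + (P/Q)^+2) = Q^+2/(Q^+2+P^+2).
Proof. by move=> h h2; field; rewrite h h2. Qed.
Lemma gA2 P Q : Q != 0 -> Q^+2 + P^+2 != 0 -> 1 + (P/Q)^+2 != 0.
Proof.
move=> h h2; have -> : 1 + (P/Q)^+2 = (Q^+2 + P^+2) / Q^+2 by field.
by rewrite mulf_neq0 // invr_eq0 expf_neq0.
Qed.
Lemma gA3 (p1 q1 p2 q2 : K) : q1 != 0 -> q2 != 0 -> p1/q1 - p2/q2 = (p1*q2 - p2*q1)/(q1*q2) :> K.
Proof. by move=> h1 h2; field; rewrite h1 h2. Qed.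
Lemma gP1 a b u v : a * u + b * v = 1 -> 1 + (a * v - b * u)^+2 != 0 ->
  (a^+2 + b^+2) * ((u^+2 + v^+2) * (1 / (1 + (a * v - b * u)^+2))) = 1.
Proof.
move=> E nz; rewrite mulrA.
have -> : (a^+2 + b^+2) * (u^+2 + v^+2) = (a * u + b * v)^+2 + (a * v - b * u)^+2 by ring.
by rewrite E expr1n mul1r divff.
Qed.
Lemma gPa x : 1 + x^+2 != 0 -> 1 - x != 0 -> 2 != 0 :> K ->
  (1 - x)^+2 + (1 + x)^+2 != 0 ->
  x / (1 + x^+2) = 1 / (1 + 1^+2) - 1 / (1 + ((1 + x)/(1 - x))^+2).
Proof. by move=> h1 h2 h3 h4; field; rewrite h1 h2 h3 h4. Qed.
Lemma gPb x : 1 + x^+2 != 0 -> (x^+2 - 1) / (1 + x^+2) = 1 - 1 / (1 + x^+2) - 1 / (1 + x^+2).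
Proof. by move=> h; field; rewrite h. Qed.
Lemma gPc x : 1 + x^+2 != 0 -> x / (1 + x^+2) * ((1+1+1+1) * (x / (1 + x^+2))) +
   (x^+2 - 1) / (1 + x^+2) * ((x^+2 - 1) / (1 + x^+2)) = 1.
Proof. by move=> h; field; rewrite h. Qed.
Lemma gPd x pz qz : 1 + x^+2 != 0 -> qz != 0 ->
  x / (1 + x^+2) + (x^+2 - 1) / (1 + x^+2) * (pz / qz) =
  (x * qz + (x^+2 - 1) * pz) / ((1 + x^+2) * qz).
Proof. by move=> h h2; field; rewrite h h2. Qed.
Lemma gPe n d p q : d != 0 -> q != 0 -> n / d * (p / q) = 1 -> n * p = d * q.
Proof.
move=> h1 h2 E; have := congr1 (fun y => y * (d * q)) E.
rewrite mul1r => <-; by field; rewrite h1 h2.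
Qed.
End Gen.


Section Main.
Variable R : rcfType.
Local Notation F := (ratfun R).
Implicit Types f g : F.

Lemma nz_frac (P : {poly R}) t : P.[t] != 0 -> P%:F != 0 :> F.
Proof.
move=> Ht; rewrite tofrac_eq0; apply: contra Ht => /eqP ->; by rewrite horner0.
Qed.

Arguments nz_frac {P t}.

Lemma nz_poly (P : {poly R}) t : P.[t] != 0 -> P != 0.
Proof. by move=> Ht; apply: contra Ht => /eqP ->; rewrite horner0. Qed.

Lemma frac_repr' (f : F) : exists p q : {poly R}, q != 0 /\ f = p%:F / q%:F :> F.
Proof. have [p [q [H E]]] := @frac_repr _ f; by exists p, q. Qed.

Definition good f := exists p q : {poly R}, (forall t, q.[t] != 0) /\ f = p%:F / q%:F.

Lemma sq_sum_nz (p q : {poly R}) t : coprimep p q -> (q ^+ 2 + p ^+ 2).[t] != 0.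
Proof.
move=> cpq; rewrite hornerD !horner_exp.
have [Hp|Hp] := eqVneq p.[t] 0.
  have : q.[t] != 0 by apply: (coprimep_root cpq); rewrite /root Hp.
  by rewrite Hp expr0n /= addr0 sqrf_eq0.
rewrite paddr_eq0 ?sqr_ge0 // negb_and !sqrf_eq0 Hp orbT //.
Qed.

Lemma dress_rep h : exists p q : {poly R},
  q != 0 /\ (forall t, (q ^+ 2 + p ^+ 2).[t] != 0) /\ h = p%:F / q%:F.
Proof.
have [p [q [q0 ->]]] := frac_repr' h.
set g := gcdp p q.
have cp : coprimep (p %/ g) (q %/ g) by apply: coprimep_div_gcd; rewrite q0 orbT.
have Ep : p = (p %/ g) * g by rewrite divpK // dvdp_gcdl.
have Eq : q = (q %/ g) * g by rewrite divpK // dvdp_gcdr.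
have g0 : g != 0 by rewrite gcdp_eq0 negb_and q0 orbT.
have q'0 : q %/ g != 0 by apply: contra q0 => /eqP H; rewrite Eq H mul0r.
exists (p %/ g), (q %/ g); split => //; split; first by move=> t; apply: sq_sum_nz.
move: Ep Eq q'0; set p' := p %/ g; set q' := q %/ g; idtac.
clearbody p' q' g => Ep Eq q'0.
rewrite Ep Eq !tofracM.
have gF : g%:F != 0 :> F by rewrite tofrac_eq0.
by rewrite -mulf_div divff // mulr1.
Qed.

Lemma dress_good h : good (1 / (1 + h ^+ 2)).
Proof.
have [p [q [q0 [Hs ->]]]] := dress_rep h.
exists (q ^+ 2), (q ^+ 2 + p ^+ 2); split => //.
have qF : q%:F != 0 :> F by rewrite tofrac_eq0.
have sF := nz_frac (Hs 0).
move: sF; rewrite tofracD !tofracXn => sF.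
exact: (@gA1 _ _ _ qF sF).
Qed.

Lemma one_plus_sq_nz h : 1 + h ^+ 2 != 0 :> F.
Proof.
have [p [q [q0 [Hs ->]]]] := dress_rep h.
have qF : q%:F != 0 :> F by rewrite tofrac_eq0.
have sF := nz_frac (Hs 0).
move: sF; rewrite tofracD !tofracXn => sF.
exact: (@gA2 _ _ _ qF sF).
Qed.

Lemma good_inD f : inD f -> good f.
Proof.
elim => [|h|x y _ [p1 [q1 [H1 ->]]] _ [p2 [q2 [H2 ->]]]
        |x y _ [p1 [q1 [H1 ->]]] _ [p2 [q2 [H2 ->]]]].
- exists 1, 1; split => [t|]; first by rewrite hornerC oner_eq0.
  by rewrite tofrac1 divr1.
- exact: dress_good.
- exists (p1 * q2 - p2 * q1), (q1 * q2); split.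
    by move=> t; rewrite hornerM; apply: mulf_neq0.
  have q1F := nz_frac (H1 0); have q2F := nz_frac (H2 0).
  by rewrite tofracB !tofracM; exact: (@gA3 _ _ _ _ _ q1F q2F).
- exists (p1 * p2), (q1 * q2); split.
    by move=> t; rewrite hornerM; apply: mulf_neq0.
  have q1F := nz_frac (H1 0); have q2F := nz_frac (H2 0).
  by rewrite !tofracM; exact: mulf_div.
Qed.

Lemma inD0 : inD (0 : F).
Proof. by rewrite -(subrr (1 : F)); apply: inD_sub; apply: inD_1. Qed.

Lemma inD_add x y : inD x -> inD y -> inD (x + y :> F).
Proof.
move=> Hx Hy; have -> : x + y = x - (0 - y) by rewrite sub0r opprK.
by apply: inD_sub => //; apply: inD_sub => //; apply: inD0.
Qed.

Lemma inD_sq x : inD x -> inD (x ^+ 2 :> F).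
Proof. by move=> Hx; rewrite expr2; apply: inD_mul. Qed.


Lemma nzF0 (P : {poly R}) : P.[0] != 0 -> P%:F != 0 :> F.
Proof. exact: nz_frac. Qed.

Lemma XfE : Xf R = 'X%:F. Proof. by []. Qed.

Lemma n1 : 1 + Xf R ^+ 2 != 0.
Proof.
rewrite XfE -tofrac1 -tofracXn -tofracD; apply: nzF0.
by rewrite !hornerE expr0n /= addr0 oner_eq0.
Qed.

Lemma n2 : 1 - Xf R != 0.
Proof.
rewrite XfE -tofrac1 -tofracB; apply: nzF0.
by rewrite !hornerE subr0 oner_eq0.
Qed.

Lemma n3 : 2 != 0 :> F.
Proof.
rewrite -(rmorph_nat (@FracField.tofrac {poly R}) 2); apply: nzF0.
by rewrite -[2]/(1 *+ 2) hornerMn hornerC pnatr_eq0.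
Qed.

Lemma n4 : (1 - Xf R) ^+ 2 + (1 + Xf R) ^+ 2 != 0.
Proof.
rewrite XfE -tofrac1 -tofracB -tofracD -!tofracXn -tofracD; apply: nzF0.
rewrite !hornerE subr0 expr1n.
by rewrite (_ : 1 + 1 = 2%:R) // pnatr_eq0.
Qed.

End Main.
Arguments one_plus_sq_nz {R} h.
Arguments good_inD {R f}.
Arguments inD_add {R x y}.
Arguments inD_sq {R x}.
Arguments nz_frac {R P t}.
Arguments n1 {R}.
Arguments n2 {R}.
Arguments n3 {R}.
Arguments n4 {R}.

Theorem mainTheorem10 (R : rcfType) :
  (forall a b : ratfun R, inD a -> inD b -> comaxD a b ->
     unitD (a ^+ 2 + b ^+ 2))
  /\
  (let a := Xf R / (1 + Xf R ^+ 2) in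
   let b := (Xf R ^+ 2 - 1) / (1 + Xf R ^+ 2) in
   inD a /\ inD b /\ comaxD a b /\
   forall z : ratfun R, inD z -> ~ unitD (a + b * z)).
Proof.
split.
  move=> a b Ha Hb [u [v [Hu [Hv E]]]].
  split; first by apply: inD_add; apply: inD_sq.
  exists ((u ^+ 2 + v ^+ 2) * (1 / (1 + (a * v - b * u) ^+ 2))); split.
    by apply: inD_mul; [apply: inD_add; apply: inD_sq | apply: inD_dress].
  exact: (@gP1 _ _ _ _ _ E (one_plus_sq_nz _)).
move=> a b.
have Ha : inD a.
  rewrite /a (@gPa _ _ n1 n2 n3 n4); apply: inD_sub; apply: inD_dress.
have Hb : inD b.
  rewrite /b (@gPb _ _ n1); apply: inD_sub; [apply: inD_sub|]; rewrite ?divr1 //;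
   try apply: inD_1; apply: inD_dress.
split => //; split => //; split.
  exists ((1 + 1 + 1 + 1) * a), b; split; last split.
  - apply: inD_mul => //; apply: inD_add; [apply: inD_add; [apply: inD_add|]|]; exact: inD_1.
  - done.
  - exact: (@gPc _ _ n1).
move=> z Hz [_ [c [Hc E]]].
have [pz [qz [Hqz Ez]]] := good_inD Hz.
have [pc [qc [Hqc Ec]]] := good_inD Hc.
move: E; rewrite /a /b Ez Ec (@gPd _ _ _ _ n1 (nz_frac (Hqz 0))).
have nD : (1 + Xf R ^+ 2) * qz%:F != 0 by rewrite mulf_neq0 // ?n1 // (nz_frac (Hqz 0)).
move/(@gPe _ _ _ _ _ nD (nz_frac (Hqc 0))).
rewrite XfE => EF.
have EP : (('X * qz + ('X ^+ 2 - 1) * pz) * pc) = ((1 + 'X ^+ 2) * qz) * qc.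
  apply/eqP; rewrite -tofrac_eq !(tofracM, tofracD, tofracB, tofracXn, tofrac1).
  rewrite tofracN tofrac1 -!expr2; exact/eqP.
set M := ('X * qz + ('X ^+ 2 - 1) * pz) * qz.
have [t _ rt] : exists2 t, -1 <= t <= 1 & root M t.
  apply: poly_ivt; first by lra.
  rewrite /M !hornerE; apply/andP; split; nra.
move: rt; rewrite /root /M hornerM mulf_eq0 (negbTE (Hqz t)) orbF => /eqP Nt.
have := congr1 (fun P => P.[t]) EP; rewrite /= hornerM Nt mul0r.
move/esym/eqP; rewrite !hornerM !mulf_eq0 (negbTE (Hqz t)) (negbTE (Hqc t)) !orbF.
have : 0 < (1 + 'X ^+ 2 : {poly R}).[t] by rewrite !hornerE; nra.
by move/lt0r_neq0/negbTE => ->.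
Qed.
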